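(* Let $A$ be a finite alphabet, $L\subseteq A^*$ and $m\in\mathbb{N}$. If all words in $\min(L)$ have length at most $m$, then ${\uparrow}L$ is $m$-PT while ${\uparrow}_<L$ and $\min(L)$ are $(m+1)$-PT.
   Context: $u\sqsubseteq v$ (subword) means $u=a_1\cdots a_n$ with letters $a_i$ and $v=v_0a_1v_1\cdots a_nv_n$; $u\sqsubset v$ means $u\sqsubseteq v$ and $u\ne v$. ${\uparrow}L=\{v~|~\exists u\in L: u\sqsubseteq v\}$, ${\uparrow}_<L=\{v~|~\exists u\in L: u\sqsubset v\}$, $\min(L)=\{u\in L~|~\forall v\in L: v\not\sqsubset u\}$. $u\sim_n v$ iff $u,v$ have the same subwords of length at most $n$; $L$ is $n$-PT if it is a union of $\sim_n$-classes. *)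

(* Defs.v *)
From mathcomp Require Import all_boot.
Set Implicit Arguments. Unset Strict Implicit. Unset Printing Implicit Defensive.

Definition lang (A : finType) := seq A -> Prop.

Definition subword (A : finType) (u v : seq A) : Prop := subseq u v.
Definition psubword (A : finType) (u v : seq A) : Prop := subseq u v /\ u <> v.

Definition upc (A : finType) (L : lang A) : lang A :=
  fun v => exists2 u, L u & subword u v.
Definition supc (A : finType) (L : lang A) : lang A :=
  fun v => exists2 u, L u & psubword u v.
Definition minL (A : finType) (L : lang A) : lang A :=
  fun u => L u /\ forall v, L v -> ~ psubword v u.

Definition simn (A : finType) (n : nat) (u v : seq A) : Prop :=
  forall w : seq A, size w <= n -> (subword w u <-> subword w v).

Definition PT (A : finType) (n : nat) (L : lang A) : Prop :=
  forall u v, simn n u v -> (L u <-> L v).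

(* Main.v *)
Require Import Defs.
From mathcomp Require Import all_boot.
From Stdlib Require Import Classical.
Set Implicit Arguments. Unset Strict Implicit.

Lemma psub_size (A : finType) (s1 s2 : seq A) :
  subseq s1 s2 -> s1 <> s2 -> size s1 < size s2.
Proof.
move=> H N; have [le E] := size_subseq_leqif H.
rewrite ltn_neqAle le andbT E; apply/eqP => e; exact: N.
Qed.

Lemma min_below (A : finType) (L : lang A) u :
  L u -> exists2 w, minL L w & subseq w u.
Proof.
move: {2}(size u) (leqnn (size u)) => n; elim: n u => [|n IH] u Hs Lu.
  have u0 : u = [::] by case: u Hs Lu.
  exists u => //; split => // v _ [H N].
  have := psub_size H N; by rewrite u0.
destruct (classic (exists v, L v /\ psubword v u)) as [[v [Lv [H N]]]|NE].
  have [w Mw Hw] := IH v (leq_trans (psub_size H N) Hs) Lv.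
  exists w => //; exact: subseq_trans Hw H.
exists u => //; split => // v Lv P; apply: NE; by exists v.
Qed.

Lemma simn_sym (A : finType) n (u v : seq A) : simn n u v -> simn n v u.
Proof. move=> H w Hw; by rewrite (H w Hw). Qed.

Lemma simn_le (A : finType) n k (u v : seq A) : k <= n -> simn n u v -> simn k u v.
Proof. move=> kn H w Hw; apply: H; exact: leq_trans Hw kn. Qed.

Lemma key (A : finType) m (u v w : seq A) :
  simn m.+1 u v -> subseq w u -> w <> u -> size w <= m -> psubword w v.
Proof.
move=> S H N sw.
have Hv : subseq w v by apply/(S w (leq_trans sw (leqnSn m))).
split => // E; subst w.
have lt := psub_size H N.
have Hx : subseq (take (size v).+1 u) u := take_subseq _ _.
have sx : size (take (size v).+1 u) = (size v).+1 by rewrite size_takel.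
have := size_subseq (proj1 (S _ (leq_trans (eq_leq sx) (sw : size v < m.+1))) Hx).
by rewrite sx ltnn.
Qed.

Theorem corollary9 (A : finType) (L : lang A) (m : nat) :
  (forall u, minL L u -> size u <= m) ->
  PT m (upc L) /\ PT m.+1 (supc L) /\ PT m.+1 (minL L).
Proof.
move=> Hm.
have U : PT m (upc L).
  suff D : forall u v, simn m u v -> upc L u -> upc L v.
    move=> u v S; split; [exact: D | apply: D; exact: simn_sym].
  move=> u v S [w Lw Hw]; have [w' Mw' Hw'] := min_below Lw.
  exists w'; first exact: (proj1 Mw').
  apply/(S w' (Hm _ Mw')); exact: subseq_trans Hw' Hw.
have SU : PT m.+1 (supc L).
  suff D : forall u v, simn m.+1 u v -> supc L u -> supc L v.
    move=> u v S; split; [exact: D | apply: D; exact: simn_sym].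
  move=> u v S [w Lw [Hw N]]; have [w' Mw' Hw'] := min_below Lw.
  exists w'; first exact: (proj1 Mw').
  apply: (key S (subseq_trans Hw' Hw)) (Hm _ Mw') => E; subst u.
  have := leq_trans (psub_size Hw N) (size_subseq Hw'); by rewrite ltnn.
split => //; split => //.
have C : forall u, minL L u <-> upc L u /\ ~ supc L u.
  move=> u; split.
    move=> [Lu Mu]; split; first by exists u => //; rewrite /subword subseq_refl.
    by rewrite /supc => -[w Lw P]; exact: (Mu w Lw P).
  move=> [[w Lw Hw] NS].
  destruct (classic (w = u)) as [E|N].
    subst w; split => // v Lv P; apply: NS; by exists v.
  by exfalso; apply: NS; exists w.
move=> u v S; rewrite !C (U u v (simn_le (leqnSn m) S)) (SU u v S); tauto.
Qed.
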